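(* Let $\mathcal{X},\mathcal{Y},\mathcal{Z}$ be sets, let $\mathcal{G}$ be a measurable space of maps $g:\mathcal{X}\to\mathcal{Z}$ (representations), let $\mathcal{H}$ be a set of maps $h:\mathcal{Z}\to\mathbb{R}$, and let $\ell$ be a real-valued loss function. Fix $T$ tasks with arbitrary datasets $\mathcal{S}_t=((x_{t,1},y_{t,1}),\dots,(x_{t,m_t},y_{t,m_t}))$, $t=1,\dots,T$, and run the EWA-LL algorithm (described in the context) with a prior $\pi_1$ on $\mathcal{G}$ and a parameter $\eta>0$. Assume that for every $t$ and every $g\in\mathcal{G}$, $\hat{L}_t(g)\in[0,C]$ and the within-task algorithm satisfies $\mathcal{R}_t(g)\le \beta(g,m_t)$. Then $$\frac{1}{T}\sum_{t=1}^T \mathbb{E}_{\hat g_t\sim\pi_t}\Big[\frac{1}{m_t}\sum_{i=1}^{m_t}\hat\ell_{t,i}\Big]\le \inf_{\rho}\Bigg\{\mathbb{E}_{g\sim\rho}\Bigg[\frac{1}{T}\sum_{t=1}^T\inf_{h_t\in\mathcal{H}}\frac{1}{m_t}\sum_{i=1}^{m_t}\ell\big(h_t\circ g(x_{t,i}),y_{t,i}\big)+\frac{1}{T}\sum_{t=1}^T\beta(g,m_t)\Bigg]+\frac{\eta C^2}{8}+\frac{\mathcal{K}(\rho,\pi_1)}{\eta T}\Bigg\},$$ where the infimum is over all probability measures $\rho$ on $\mathcal{G}$ and $\mathcal{K}(\rho,\pi_1)$ is the Kullback–Leibler divergence between $\rho$ and $\pi_1$.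
   Context: Within-task algorithm: for each task $t$ and each representation $g\in\mathcal{G}$, an online algorithm processes the points of $\mathcal{S}_t$ sequentially: at step $i$ it sees $x_{t,i}$, outputs a prediction $\hat y^g_{t,i}$ (depending only on $g$, $x_{t,1},\dots,x_{t,i}$, $y_{t,1},\dots,y_{t,i-1}$), then $y_{t,i}$ is revealed. Its average loss is $\hat{L}_t(g)=\frac{1}{m_t}\sum_{i=1}^{m_t}\ell(\hat y^g_{t,i},y_{t,i})$ (assumed measurable in $g$), and its within-task regret is $\mathcal{R}_t(g)=\hat{L}_t(g)-\inf_{h\in\mathcal{H}}\frac{1}{m_t}\sum_{i=1}^{m_t}\ell(h\circ g(x_{t,i}),y_{t,i})$. EWA-LL: given a probability measure $\pi_1$ on $\mathcal{G}$ and $\eta>0$, for $t=1,\dots,T$: (i) draw $\hat g_t\sim\pi_t$; (ii) run the within-task algorithm on $\mathcal{S}_t$ with representation $\hat g_t$, incurring losses $\hat\ell_{t,i}=\ell(\hat y^{\hat g_t}_{t,i},y_{t,i})$; (iii) set $\pi_{t+1}(\mathrm{d}g)=\exp(-\eta\hat L_t(g))\pi_t(\mathrm{d}g)/\int\exp(-\eta\hat L_t(\gamma))\pi_t(\mathrm{d}\gamma)$. The expectation $\mathbb{E}_{\hat g_t\sim\pi_t}$ is over the random draw of $\hat g_t$ at step (i). *)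

(* Defs.v *)
From HB Require Import structures.
From mathcomp Require Import all_boot all_order all_algebra.
From mathcomp Require Import all_classical all_reals all_analysis.
Set Implicit Arguments. Unset Strict Implicit. Unset Printing Implicit Defensive.
Import Order.TTheory GRing.Theory Num.Theory.
Local Open Scope classical_set_scope.
Local Open Scope ring_scope.
Local Open Scope charge_scope.

Definition KL d (T : measurableType d) (R : realType)
  (rho mu : probability T R) : \bar R :=
  if pselect (rho `<< mu) then
    (\int[rho]_x (ln (fine ('d (charge_of_finite_measure rho) '/d mu x)))%:E)%E
  else +oo%E.

(* Data of task t (0-based, t = 0, ..., T-1): examples (x t i, y t i),
   i = 0, ..., m t - 1.  Representations are elements g of the measurable
   space G, acting as maps X -> Z through [rep]. *)

Definition yhat (R : realType) (G X Y : Type) (alg : G -> seq (X * Y) -> X -> R)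
  (x : nat -> nat -> X) (y : nat -> nat -> Y) (t i : nat) (g : G) : R :=
  alg g [seq (x t j, y t j) | j <- iota 0 i] (x t i).

Definition Lhat (R : realType) (G X Y : Type) (alg : G -> seq (X * Y) -> X -> R)
  (ell : R -> Y -> R) (m : nat -> nat)
  (x : nat -> nat -> X) (y : nat -> nat -> Y) (t : nat) (g : G) : R :=
  (m t)%:R^-1 * \sum_(i < m t) ell (yhat alg x y t i g) (y t i).

Definition best_loss (R : realType) (G X Y Z : Type) (rep : G -> X -> Z)
  (H : set (Z -> R)) (ell : R -> Y -> R) (m : nat -> nat)
  (x : nat -> nat -> X) (y : nat -> nat -> Y) (t : nat) (g : G) : \bar R :=
  ereal_inf [set ((m t)%:R^-1 * \sum_(i < m t) ell (h (rep g (x t i))) (y t i))%:E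
            | h in H].

Definition regret (R : realType) (G X Y Z : Type) (rep : G -> X -> Z)
  (H : set (Z -> R)) (alg : G -> seq (X * Y) -> X -> R)
  (ell : R -> Y -> R) (m : nat -> nat)
  (x : nat -> nat -> X) (y : nat -> nat -> Y) (t : nat) (g : G) : \bar R :=
  ((Lhat alg ell m x y t g)%:E - best_loss rep H ell m x y t g)%E.

(* Main.v *)
Require Import Defs.
From HB Require Import structures.
From mathcomp Require Import all_boot all_order all_algebra.
From mathcomp Require Import all_classical all_reals all_analysis.
From mathcomp Require Import ring lra measurable_realfun.
Import Order.TTheory GRing.Theory Num.Theory.
Local Open Scope classical_set_scope.
Local Open Scope ring_scope.

Section S.
Variable R : realType.
Lemma scalRE (a b : R) : a *: b = a * b. Proof. by []. Qed.
Lemma hoeff_real (p u : R) : 0 <= p <= 1 -> u <= 0 ->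
  1 - p + p * expR u <= expR (p * u + u ^+ 2 / 8).
Proof.
move=> /andP[p0 p1] u0.
pose D := fun v : R => 1 - p + p * expR v.
have Dpos v : 0 < D v.
  rewrite /D; have e0 := expR_gt0 v.
  have [ph|ph] := lerP p (1/2).
    have : 0 <= p * expR v by rewrite mulr_ge0 // ltW.
    lra.
  have : (1/2) * expR v <= p * expR v by rewrite ler_pM2r //; exact: ltW.
  lra.
have dD x : is_derive x (1:R) D (p * expR x).
  by rewrite /D; apply: is_derive_eq; rewrite !scalRE; ring.
pose q := fun v => p * expR v / D v.
pose r := fun v => q v - v / 4.
have dr y : is_derive y (1:R) r (p * expR y * (1 - p) / (D y)^+2 - 1/4).
  have Dx0 : D y != 0 by rewrite gt_eqF.
  rewrite /r /q; apply: is_derive_eq.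
  rewrite !scalRE /D /=. field.
  by move: Dx0; rewrite /D.
have cont (f : R -> R) (df : R -> R) : (forall y, is_derive y (1:R) f (df y)) -> continuous (f : R^o -> R^o).
  move=> H y; apply: differentiable_continuous; apply/derivable1_diffP.
  by case: (H y).
have rp y : p * expR y * (1 - p) / (D y)^+2 - 1/4 <= 0.
  have D2 : 0 < (D y)^+2 by rewrite exprn_gt0.
  rewrite subr_le0 ler_pdivrMr // /D.
  have e0 := expR_gt0 y.
  have := sqr_ge0 (1 - p - p * expR y). nra.
have r0 : r 0 = p.
  rewrite /r /q /D expR0 mulr1 mul0r subr0.
  have -> : 1 - p + p = 1 by ring.
  by rewrite divr1.
have rge : r 0 <= r u.
  apply: (@ler0_derive1_nincrNy _ r 0) => //.
  - by move=> y _; rewrite derive1E; case: (dr y) => _ ->; exact: rp.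
  - exact: (continuous_subspaceT (cont _ _ dr)).
pose f := fun v => ln (D v) - p * v - v ^+ 2 / 8.
have df y : is_derive y (1:R) f (r y - p).
  have dl := is_derive1_comp (is_derive1_ln (Dpos y)) (dD y).
  have -> : f = (@ln R \o D) - (fun v => p * v) - (fun v => v ^+ 2 / 8).
    by apply/funext => v.
  apply: is_derive_eq.
  rewrite !scalRE /r /q /=. field.
  by rewrite gt_eqF.
have rmono y : y <= 0 -> p <= r y.
  move=> y0; rewrite -r0.
  apply: (@ler0_derive1_nincrNy _ r 0) => //.
  - by move=> z _; rewrite derive1E; case: (dr z) => _ ->; exact: rp.
  - exact: (continuous_subspaceT (cont _ _ dr)).
have fle : f u <= f 0.
  apply: (@ger0_derive1_ndecrNy _ f 0) => //.
  - move=> z; rewrite in_itv /= => z0; rewrite derive1E; case: (df z) => _ ->.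
    by rewrite subr_ge0; apply: rmono; exact: ltW.
  - exact: (continuous_subspaceT (cont _ _ df)).
have f0 : f 0 = 0.
  rewrite /f /D expR0 mulr1 mulr0 expr0n /= mul0r !subr0.
  have -> : 1 - p + p = 1 by ring.
  by rewrite ln1.
have : ln (D u) <= p * u + u ^+ 2 / 8.
  move: fle; rewrite f0 /f; lra.
rewrite -ler_expR lnK //; rewrite posrE; exact: Dpos.
Qed.
Local Open Scope convex_scope.
Lemma expR_chord (b s : R) : b < 0 -> b <= s <= 0 ->
  expR s <= 1 - s / b + s / b * expR b.
Proof.
move=> b0 /andP[bs s0].
have t0 : 0 <= s / b by rewrite ler_ndivlMr // mul0r.
have t1 : s / b <= 1 by rewrite ler_ndivrMr // mul1r.
have := convex_expR (Itv01 t0 t1) b 0.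
rewrite !convRE /= expR0 /unstable.onem mulr0 addr0 divfK ?lt_eqF //.
lra.
Qed.
Local Close Scope convex_scope.
End S.

Section S.
Context d (T : measurableType d) (R : realType).
Local Open Scope ereal_scope.

Lemma bnd_int (P : probability T R) (f : T -> R) (M : R) :
  measurable_fun setT f -> (forall x, `|f x| <= M)%R ->
  P.-integrable setT (EFin \o f).
Proof.
move=> mf fM; apply/integrableP; split; first exact/measurable_EFinP.
apply: le_lt_trans.
  apply: (integral_le_bound `|M|%:E) => //; first exact/measurable_EFinP.
  by apply: aeW => z _ /=; rewrite lee_fin (le_trans (fM z)) // real_ler_norm // num_real.
have P1 : P setT = 1 := probability_setT P.
by rewrite (_ : (P : {measure set T -> \bar R}) setT = 1) ?mule1 ?ltry //; exact: probability_setT.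
Qed.

Lemma probT (P : probability T R) : (P : {measure set T -> \bar R}) setT = 1.
Proof. exact: probability_setT. Qed.

Lemma hoeffding (P : probability T R) (X : T -> R) (C eta : R) :
  measurable_fun setT X -> (forall x, 0 <= X x <= C)%R -> (0 < eta)%R ->
  \int[P]_x (expR (- eta * X x))%:E <=
  (expR (- eta * fine (\int[P]_x (X x)%:E) + eta ^+ 2 * C ^+ 2 / 8))%:E.
Proof.
move=> mX XC eta0.
have iX : P.-integrable setT (EFin \o X).
  apply: (@bnd_int P X C) => // x; have /andP[x0 x1] := XC x.
  by rewrite ger0_norm.
have EXf : \int[P]_x (X x)%:E = (fine (\int[P]_x (X x)%:E))%:E.
  by rewrite fineK //; exact: integrable_fin_num iX.
set EX := fine _ in EXf *.
have EX0 : (0 <= EX)%R.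
  rewrite -lee_fin -EXf; apply: integral_ge0 => x _.
  by have /andP[] := XC x; rewrite lee_fin.
have EXC : (EX <= C)%R.
  rewrite -lee_fin -EXf.
  have : \int[P]_x (X x)%:E <= \int[P]_x (cst C%:E) x.
    apply: ge0_le_integral => //.
    - by move=> x _; have /andP[] := XC x; rewrite lee_fin.
    - exact/measurable_EFinP.
    - by move=> x _; have /andP[] := XC x; rewrite lee_fin.
  by rewrite integral_cst // probT mule1.
have [C0|C0] := lerP C 0%R.
  have X0 x : X x = 0%R.
    by have /andP[x0 x1] := XC x; apply/eqP; rewrite eq_le x0 (le_trans x1 C0).
  have -> : EX = 0%R by apply/eqP; rewrite eq_le EX0 (le_trans EXC C0).
  under eq_integral do rewrite X0 mulr0 expR0.
  rewrite integral_cst // probT mule1 lee_fin mulr0 add0r.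
  apply: le_trans (expR_ge1Dx _); rewrite lerDl.
  by rewrite divr_ge0 // mulr_ge0 // sqr_ge0.
pose k := expR (- eta * C).
pose a := ((k - 1) / C)%R.
have pw x : (expR (- eta * X x) <= 1 + a * X x)%R.
  have /andP[x0 x1] := XC x.
  have b0 : (- eta * C < 0)%R by rewrite mulNr oppr_lt0 mulr_gt0.
  have := @expR_chord R (- eta * C) (- eta * X x) b0.
  have -> : (- eta * X x / (- eta * C) = X x / C)%R.
    by field; rewrite ?gt_eqF //.
  have -> : (1 + a * X x = 1 - X x / C + X x / C * k)%R.
    by rewrite /a; field; rewrite gt_eqF.
  apply; rewrite !mulNr lerN2 oppr_le0 ler_pM2l // x1 /=.
  by rewrite mulr_ge0 // ltW.
have mX' : measurable_fun setT (fun x => (1 + a * X x)%R).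
  by apply: measurable_funD => //; apply: measurable_funM.
apply: (@le_trans _ _ (\int[P]_x (1 + a * X x)%:E)).
  apply: ge0_le_integral => //.
  - apply/measurable_EFinP; apply: measurableT_comp => //.
    by apply: measurable_funM.
  - exact/measurable_EFinP.
  - by move=> x _; rewrite lee_fin.
have -> : \int[P]_x (1 + a * X x)%:E = (1 + a * EX)%:E.
  under eq_integral do rewrite EFinD EFinM.
  rewrite integralD //.
  - rewrite integral_cst // probT mule1 integralZl // EXf.
    by rewrite -EFinM -EFinD.
  - exact: finite_measure_integrable_cst.
  - exact: integrableZl.
have p0 : (0 <= EX / C)%R by rewrite divr_ge0 // ltW.
have p1 : (EX / C <= 1)%R by rewrite ler_pdivrMr // mul1r.
have u0 : (- (eta * C) <= 0)%R by rewrite oppr_le0 mulr_ge0 // ltW.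
have := @hoeff_real R (EX / C) (- (eta * C)) (introT andP (conj p0 p1)) u0.
have -> : (1 - EX / C + EX / C * expR (- (eta * C)) = 1 + a * EX)%R.
  by rewrite /a /k mulNr; field; rewrite gt_eqF.
have -> : (EX / C * - (eta * C) + (- (eta * C)) ^+ 2 / 8 = - eta * EX + eta ^+ 2 * C ^+ 2 / 8)%R.
  by field; rewrite gt_eqF.
by rewrite lee_fin.
Qed.
End S.

Section S.
Context d (T : measurableType d) (R : realType).
Local Open Scope ereal_scope.
Import HBNNSimple.

Lemma density_cov (mu nu : {measure set T -> \bar R}) (E : set T) (g : T -> \bar R) :
  measurable E -> measurable_fun E g -> (forall x, E x -> 0 <= g x) ->
  (forall x, E x -> g x \is a fin_num) ->
  (forall A, measurable A -> A `<=` E -> nu A = \int[mu]_(x in A) g x) ->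
  forall f, (forall x, 0 <= f x) -> measurable_fun E f ->
  \int[mu]_(x in E) (f x * g x) = \int[nu]_(x in E) f x.
Proof.
move=> mE mg g0 gfin gint f f0 mf.
pose h := nnsfun_approx mE mf.
have -> : \int[nu]_(x in E) f x =
    lim (\int[nu]_(x in E) (EFin \o h n) x @[n --> \oo]).
  have fE x : E x -> f x = lim ((EFin \o h n) x @[n --> \oo]).
    by move=> Ex; apply/esym/cvg_lim => //; exact: cvg_nnsfun_approx.
  under eq_integral => x /[!inE] /fE -> //.
  apply: monotone_convergence => //.
  - move=> n; apply/measurable_EFinP.
    by apply: (measurable_funS measurableT) => //; exact/measurable_funP.
  - by move=> n x Ex //=; rewrite lee_fin.
  - by move=> x Ex a b ab; rewrite lee_fin; exact/lefP/nd_nnsfun_approx.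
have -> : \int[mu]_(x in E) (f \* g) x =
    lim (\int[mu]_(x in E) ((EFin \o h n) \* g) x @[n --> \oo]).
  have fg x : E x -> f x * g x = lim (((EFin \o h n) \* g) x @[n --> \oo]).
    by move=> Ex; apply/esym/cvg_lim => //; apply: cvgeZr;
      [exact: gfin|exact: cvg_nnsfun_approx].
  under eq_integral => x /[!inE] /fg -> //.
  apply: monotone_convergence => [//| | |].
  - move=> n; apply/emeasurable_funM => //.
    apply/measurable_funTS.
    exact/measurable_EFinP.
  - by move=> n x Ex /=; rewrite mule_ge0 ?lee_fin ?g0.
  - by move=> x Ex a b ab/=; rewrite lee_wpmul2r ?lee_fin ?g0//; exact/lefP/nd_nnsfun_approx.
suff suf n : \int[mu]_(x in E) ((EFin \o h n) x * g x) =
    \int[nu]_(x in E) (EFin \o h n) x.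
  by under eq_fun do rewrite suf.
transitivity (\int[nu]_(x in E)
   (\sum_(y \in range (h n)) (y * \1_(h n @^-1` [set y]) x)%:E)); last first.
  by apply: eq_integral => t tE; rewrite /= fimfunE -fsumEFin.
have indich m r : measurable_fun E (fun x => (r * \1_(h m @^-1` [set r]) x)%:E).
  by apply: (measurable_comp measurableT) => //; exact: measurable_funM.
rewrite ge0_integral_fsum//; last by move=> m y Ey; exact: nnfun_muleindic_ge0.
transitivity (\int[mu]_(x in E) (\sum_(y \in range (h n))
    (y * \1_(h n @^-1` [set y]) x)%:E * g x)).
  under [RHS]eq_integral => x xE.
    rewrite -ge0_mule_fsuml => [|y]; last exact: nnfun_muleindic_ge0.
    rewrite fsumEFin // -(fimfunE _ x); over.
  by [].
rewrite ge0_integral_fsum//; last 2 first.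
  - move=> y; apply: emeasurable_funM => //.
  - by move=> m y Ey; rewrite mule_ge0 ?g0// nnfun_muleindic_ge0.
apply: eq_fsbigr => r rhn.
under [RHS]eq_integral do rewrite EFinM.
rewrite integralZl_indic_nnsfun => //.
under eq_integral do rewrite EFinM -muleA.
rewrite ge0_integralZl//.
- under eq_integral do rewrite muleC.
  rewrite (eq_integral (g \_ (h n @^-1` [set r]))); last first.
    by move=> x xE; rewrite epatch_indic.
  by rewrite -integral_mkcondr -gint// integral_indic// setIC//.
- apply: emeasurable_funM => //; apply/measurable_EFinP.
  exact/measurable_funTS.
- by move=> t Et; rewrite mule_ge0 ?lee_fin ?g0.
- by move: rhn; rewrite inE => -[t _ <-]; rewrite lee_fin.
Qed.
End S.

Section S.
Context d (T : measurableType d) (R : realType).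
Local Open Scope ereal_scope.

Lemma le_integral_int (mu : {measure set T -> \bar R}) (D : set T) (f g : T -> \bar R) :
  measurable D -> mu.-integrable D f -> measurable_fun D g ->
  (forall x, D x -> f x <= g x) ->
  \int[mu]_(x in D) f x <= \int[mu]_(x in D) g x.
Proof.
move=> mD intf mg fg.
have mf := measurable_int _ intf.
rewrite integralE [leRHS]integralE.
have h1 : \int[mu]_(x in D) f^\+ x <= \int[mu]_(x in D) g^\+ x.
  apply: ge0_le_integral => //.
  - exact: measurable_funepos.
  - exact: measurable_funepos.
  - move=> x Dx; apply: (@funepos_le _ _ D); last by rewrite inE.
    by move=> y; rewrite inE; exact: fg.
have h2 : \int[mu]_(x in D) g^\- x <= \int[mu]_(x in D) f^\- x.
  apply: ge0_le_integral => //.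
  - exact: measurable_funeneg.
  - exact: measurable_funeneg.
  - move=> x Dx; apply: (@funeneg_le _ _ D); last by rewrite inE.
    by move=> y; rewrite inE; exact: fg.
exact: leeB.
Qed.

Lemma le_integral_nm (mu : {measure set T -> \bar R}) (f g : T -> \bar R) :
  (forall x, 0 <= f x) -> (forall x, f x <= g x) ->
  \int[mu]_x f x <= \int[mu]_x g x.
Proof.
move=> f0 fg.
have g0 x : 0 <= g x by exact: le_trans (f0 x) (fg x).
rewrite /integral.
have Ef : (f \_ setT)^\- = cst 0.
  apply/funext => x; rewrite patch_setT; apply: (@ge0_funenegE _ _ setT) => //.
  by rewrite inE.
have Eg : (g \_ setT)^\- = cst 0.
  apply/funext => x; rewrite patch_setT; apply: (@ge0_funenegE _ _ setT) => //.
  by rewrite inE.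
rewrite Ef Eg; apply: leeB => //.
apply: le_ereal_sup => _ [h hf <-]; exists h => //= x.
apply: le_trans (hf x) _; rewrite !patch_setT.
by apply: (@funepos_le _ _ setT) => //; last by rewrite inE.
Qed.
End S.

Local Open Scope charge_scope.
Section S.
Context d (T : measurableType d) (R : realType).
Local Open Scope ereal_scope.
Lemma gibbs (mu rho : probability T R) (w : T -> R) (M : R) :
  measurable_fun setT w -> (forall x, 0 < w x)%R -> (forall x, `|ln (w x)| <= M)%R ->
  \int[mu]_x (w x)%:E <= 1 ->
  \int[rho]_x (ln (w x))%:E <= KL rho mu.
Proof.
move=> mw w0 wM wint.
rewrite /KL; destruct (pselect (rho `<< mu)) as [rmu|nrmu]; simpl; last exact: leey.
pose D := 'd (charge_of_finite_measure rho) '/d mu.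
have mD : measurable_fun setT D.
  exact: measurable_int (@Radon_Nikodym_integrable _ _ _ (charge_of_finite_measure rho) mu rmu).
have Dfin x : D x \is a fin_num := @Radon_Nikodym_fin_num _ _ _ (charge_of_finite_measure rho) mu x rmu.
have Dint A : measurable A -> rho A = \int[mu]_(x in A) D x.
  move=> mA; rewrite /D -(@Radon_Nikodym_integral _ _ _ (charge_of_finite_measure rho) mu) //.
pose k x := ln (fine (D x)).
have mk : measurable_fun setT k.
  apply: measurableT_comp; first exact: measurable_ln.
  by apply: measurableT_comp.
pose lw x := ln (w x).
have mlw : measurable_fun setT lw.
  by apply: measurableT_comp; first exact: measurable_ln.
pose v x := expR (lw x - k x).
have mv : measurable_fun setT v.
  apply: measurableT_comp; first exact: measurable_expR.
  exact: measurable_funB.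
pose lb x := (lw x + 1 - v x)%R.
have klb x : (lb x <= k x)%R.
  have := expR_ge1Dx (lw x - k x); rewrite /lb -/(v x); lra.
pose Pp := [set x | 0 < D x].
have mPp : measurable Pp.
  by rewrite -[Pp]setTI; exact: emeasurable_fun_o_infty.
have mNPp : measurable (~` Pp) by exact: measurableC.
have rhoN : rho (~` Pp) = 0.
  apply/eqP; rewrite eq_le measure_ge0 andbT Dint //.
  have iD : mu.-integrable (~` Pp) D.
    apply: (integrableS measurableT) => //.
    exact: (@Radon_Nikodym_integrable _ _ _ (charge_of_finite_measure rho) mu rmu).
  have : \int[mu]_(x in ~` Pp) D x <= \int[mu]_(x in ~` Pp) (cst 0) x.
    apply: le_integral_int => //.
    by move=> x; rewrite /Pp /= leNgt => /negP.
  by rewrite integral0.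
have v0 x : (0 <= v x)%R by exact: expR_ge0.
have vint : \int[rho]_x (v x)%:E <= 1.
  rewrite -(setUv Pp) integral_setU //; last 2 first.
  - by rewrite setUv; exact/measurable_EFinP.
  - by rewrite disj_set2E setICr.
  rewrite (@null_set_integral _ _ _ rho (~` Pp)) //; last exact/measurable_funTS/measurable_EFinP.
  rewrite adde0.
  have -> : \int[rho]_(x in Pp) (v x)%:E = \int[mu]_(x in Pp) ((v x)%:E * D x).
    rewrite (@density_cov _ _ _ mu rho Pp D) //.
    - exact: measurable_funTS.
    - by move=> x Px; exact: ltW.
    - by move=> A mA _; exact: Dint.
    - exact/measurable_funTS/measurable_EFinP.
  rewrite (eq_integral (fun x => (w x)%:E)); last first.
    move=> x; rewrite inE /Pp /= => Dx.
    have Dr : (0 < fine (D x))%R by apply: fine_gt0; rewrite Dx /= ltey_eq Dfin.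
    rewrite -[D x](fineK (Dfin x)) -EFinM /v /lw /k expRB !lnK ?posrE //.
    by rewrite divfK // gt_eqF.
  apply: le_trans wint.
  apply: ge0_subset_integral => //; first exact/measurable_EFinP.
  by move=> x _; rewrite lee_fin ltW.
have iv : rho.-integrable setT (EFin \o v).
  apply/integrableP; split; first exact/measurable_EFinP.
  under eq_integral do rewrite /= ger0_norm //.
  by apply: le_lt_trans vint _; rewrite ltry.
have ilw : rho.-integrable setT (EFin \o lw) by apply: (@bnd_int _ _ _ rho lw M).
have i1 : rho.-integrable setT (EFin \o (cst 1%R)) by exact: finite_measure_integrable_cst.
have ilw1 : rho.-integrable setT (EFin \o (fun x => lw x + 1)%R).
  have -> : (EFin \o (fun x => lw x + 1)%R) = (EFin \o lw) \+ (EFin \o cst 1%R) by [].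
  exact: integrableD.
have ilb : rho.-integrable setT (EFin \o lb).
  have -> : (EFin \o lb) = (EFin \o (fun x => lw x + 1)%R) \+ (fun x => - (v x)%:E).
    by apply/funext => x.
  apply: integrableD => //; exact: integrableN.
have Elb : \int[rho]_x (lb x)%:E = \int[rho]_x (lw x)%:E + 1 - \int[rho]_x (v x)%:E.
  rewrite /lb; under eq_integral do rewrite EFinB.
  rewrite integralB_EFin //.
  under eq_integral do rewrite EFinD.
  rewrite integralD //.
  by rewrite integral_cst // probT mule1.
have : \int[rho]_x (lb x)%:E <= \int[rho]_x (k x)%:E.
  apply: le_integral_int => //; first exact/measurable_EFinP.
  by move=> x _; rewrite lee_fin.
rewrite Elb.
have flw := integrable_fin_num measurableT ilw.
have fv := integrable_fin_num measurableT iv.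
move: vint flw fv.
set a := \int[rho]_x (lw x)%:E.
set b := \int[rho]_x (v x)%:E.
move=> ble fa fb.
rewrite -(fineK fa) -(fineK fb) in ble *.
move: ble; rewrite lee_fin => ble.
move=> H; apply: le_trans H.
have -> : (fine a)%:E + 1 - (fine b)%:E = (fine a + 1 - fine b)%:E by [].
by rewrite lee_fin; lra.
Qed.
End S.

Local Close Scope charge_scope.

Theorem theorem1 (R : realType) (X Y Z : Type) (d : measure_display)
  (G : measurableType d) (rep : G -> X -> Z) (H : set (Z -> R))
  (ell : R -> Y -> R) (T : nat) (m : nat -> nat)
  (x : nat -> nat -> X) (y : nat -> nat -> Y)
  (alg : G -> seq (X * Y) -> X -> R) (beta : G -> nat -> R) (C eta : R)
  (pi : nat -> probability G R) :
  0 < eta ->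
  (forall t, (t < T)%N -> measurable_fun setT (Lhat alg ell m x y t)) ->
  (forall t g, (t < T)%N -> 0 <= Lhat alg ell m x y t g <= C) ->
  (forall t g, (t < T)%N ->
     (regret rep H alg ell m x y t g <= (beta g (m t))%:E)%E) ->
  (forall t A, (t < T)%N -> measurable A ->
     pi t.+1 A =
       (\int[pi t]_(g in A) (expR (- eta * Lhat alg ell m x y t g))%:E
        * ((fine (\int[pi t]_g (expR (- eta * Lhat alg ell m x y t g))%:E))^-1)%:E)%E) ->
  ((T%:R^-1)%:E * (\sum_(t < T) \int[pi t]_g (Lhat alg ell m x y t g)%:E)
   <= ereal_inf (range (fun rho : probability G R =>
        \int[rho]_g ((T%:R^-1)%:E * (\sum_(t < T) best_loss rep H ell m x y t g)
                     + (T%:R^-1 * \sum_(t < T) beta g (m t))%:E)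
        + (eta * C ^+ 2 / 8)%:E
        + KL rho (pi 0%N) * ((eta * T%:R)^-1)%:E)))%E.
Proof.
move=> eta0 mL LC reg upd.
set L := Lhat alg ell m x y.
apply: le_ereal_inf_tmp => _ [rho _ <-].
have [->|T0] := posnP T.
  rewrite big_ord0 mule0 mulr0 invr0 mule0 adde0.
  under eq_integral do rewrite !big_ord0 mule0 mulr0 add0e.
  rewrite integral0 add0e lee_fin.
  by rewrite divr_ge0 // mulr_ge0 ?sqr_ge0 // ltW.
have LC' t g : (t < T)%N -> 0 <= L t g <= C by exact: LC.
pose Sk k g := \sum_(t < k) L t g.
pose Zt t := fine (\int[pi t]_g (expR (- eta * L t g))%:E).
pose Vt k := \prod_(t < k) Zt t.
have eL t g : (t < T)%N -> 0 < expR (- eta * L t g) <= 1.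
  move=> tT; rewrite expR_gt0 /= expR_le1 mulNr oppr_le0.
  by apply: mulr_ge0; [exact: ltW | case/andP: (LC' t g tT)].
have ieL t : (t < T)%N -> (pi t).-integrable setT (EFin \o (fun g => expR (- eta * L t g))).
  move=> tT; apply: (@bnd_int _ _ _ (pi t) _ 1).
    apply: measurableT_comp => //; apply: measurable_funM => //; exact: mL.
  by move=> g; case/andP: (eL t g tT) => a b; rewrite ger0_norm // ltW.
have Zpos t : (t < T)%N -> 0 < Zt t.
  move=> tT; rewrite /Zt; apply: fine_gt0.
  have fi := integrable_fin_num measurableT (ieL t tT).
  apply/andP; split; last by rewrite ltey_eq fi.
  have h1 : (0 < \int[pi t]_g (cst (expR (- eta * C))%:E) g)%E.
    by rewrite integral_cst // probT mule1 lte_fin expR_gt0.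
  apply: (lt_le_trans h1).
  apply: ge0_le_integral => //.
  - by move=> g _; rewrite lee_fin expR_ge0.
  - exact: (measurable_int _ (ieL t tT)).
  - move=> g _; rewrite lee_fin ler_expR !mulNr lerN2 ler_pM2l //.
    by case/andP: (LC' t g tT).
have Vpos k : (k <= T)%N -> 0 < Vt k.
  move=> kT; apply: prodr_gt0 => i _; apply: Zpos.
  exact: leq_trans (ltn_ord i) kT.
have mSk k : (k <= T)%N -> measurable_fun setT (Sk k).
  move=> kT; apply: measurable_sum => i; apply: mL; exact: leq_trans (ltn_ord i) kT.
have dens k : (k <= T)%N -> forall h : G -> \bar R, (forall g, 0 <= h g)%E ->
    measurable_fun setT h ->
    (\int[pi k]_g h g = \int[pi 0%N]_g (h g * (expR (- eta * Sk k g) / Vt k)%:E))%E.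
  elim: k => [_ h h0 mh|k IH kT h h0 mh].
    apply: eq_integral => g _.
    by rewrite /Sk /Vt !big_ord0 mulr0 expR0 divr1 mule1.
  have kT' : (k < T)%N by exact: kT.
  pose gk g := ((expR (- eta * L k g))%:E * ((Zt k)^-1)%:E)%E.
  have mgk : measurable_fun setT gk.
    apply: emeasurable_funM => //; exact: (measurable_int _ (ieL k kT')).
  have <- : (\int[pi k]_g (h g * gk g) = \int[pi k.+1]_g h g)%E.
    apply: density_cov => //.
    - by move=> g _; rewrite /gk -EFinM lee_fin mulr_ge0 ?expR_ge0 // invr_ge0 ltW // Zpos.
    - move=> A mA _.
      have -> : (pi k.+1 : {measure set G -> \bar R}) A = pi k.+1 A by [].
      rewrite upd // /gk integralZr //.
      exact: integrableS (ieL k kT').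
  have hk0 g : (0 <= h g * gk g)%E.
    by rewrite mule_ge0 // /gk -EFinM lee_fin mulr_ge0 ?expR_ge0 // invr_ge0 ltW // Zpos.
  have mhk : measurable_fun setT (fun g => h g * gk g)%E by exact: emeasurable_funM.
  rewrite (IH (ltnW kT) _ hk0 mhk).
  apply: eq_integral => g _.
  rewrite -muleA; congr (h g * _)%E; rewrite /gk -!EFinM; congr EFin.
  have Z0 : Zt k != 0 by rewrite gt_eqF // Zpos.
  have V0 : Vt k != 0 by rewrite gt_eqF // Vpos // ltnW.
  rewrite /Sk /Vt !big_ord_recr /= -/(Vt k) mulrDr expRD.
  by field; rewrite Z0 V0.
pose Et t := fine (\int[pi t]_g (L t g)%:E).
have hoeff t : (t < T)%N -> ln (Zt t) <= - eta * Et t + eta ^+ 2 * C ^+ 2 / 8.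
  move=> tT.
  have := @hoeffding _ _ _ (pi t) (L t) C eta (mL t tT) (fun g => LC' t g tT) eta0.
  rewrite -(fineK (integrable_fin_num measurableT (ieL t tT))) lee_fin -/(Zt t) -/(Et t).
  by move=> hZ; rewrite -ler_expR lnK ?posrE ?Zpos.
have lnV k : (k <= T)%N -> ln (Vt k) = \sum_(t < k) ln (Zt t).
  elim: k => [_|k IH kT]; first by rewrite /Vt !big_ord0 ln1.
  have kT' : (k <= T)%N by exact: ltnW.
  rewrite /Vt big_ord_recr /= -/(Vt k) lnM; last 2 first.
  - by rewrite posrE; apply: Vpos.
  - by rewrite posrE; apply: Zpos.
  by rewrite IH // big_ord_recr.
have sumH : ln (Vt T) <= - eta * (\sum_(t < T) Et t) + T%:R * (eta ^+ 2 * C ^+ 2 / 8).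
  rewrite lnV //.
  apply: le_trans (ler_sum _ (fun (t : 'I_T) _ => hoeff t (ltn_ord t))) _.
  by rewrite big_split /= -mulr_sumr sumr_const card_ord mulr_natl.
have ST g : 0 <= Sk T g <= T%:R * C.
  apply/andP; split.
    by apply: sumr_ge0 => t _; case/andP: (LC' t g (ltn_ord t)).
  have hle (t : 'I_T) : true -> L t g <= C by move=> _; case/andP: (LC' t g (ltn_ord t)).
  apply: le_trans (ler_sum _ hle) _.
  by rewrite sumr_const card_ord mulr_natl.
pose w g := expR (- eta * Sk T g) / Vt T.
have VT := Vpos T (leqnn T).
have wpos g : 0 < w g by rewrite divr_gt0 ?expR_gt0.
have lnw g : ln (w g) = - eta * Sk T g - ln (Vt T).
  by rewrite /w ln_div ?posrE ?expR_gt0 // expRK.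
have mw : measurable_fun setT w.
  apply: measurable_funM => //; apply: measurableT_comp => //.
  by apply: measurable_funM => //; exact: mSk.
have wint : (\int[pi 0%N]_g (w g)%:E <= 1)%E.
  have := dens T (leqnn T) (cst 1%E) (fun _ => lee01) (measurable_cst _).
  rewrite integral_cst // probT mule1.
  under eq_integral do rewrite mul1e.
  by move=> <-.
have wM g : `|ln (w g)| <= eta * (T%:R * C) + `|ln (Vt T)|.
  rewrite lnw; case/andP: (ST g) => s0 s1.
  have h1 : eta * Sk T g <= eta * (T%:R * C) by rewrite ler_pM2l.
  have h2 : 0 <= eta * Sk T g by rewrite mulr_ge0 // ltW.
  have h3 := ler_norm (ln (Vt T)).
  have h4 : - ln (Vt T) <= `|ln (Vt T)| by rewrite -normrN ler_norm.
  rewrite ler_norml mulNr; apply/andP; split; lra.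
have Gb := @gibbs _ _ _ (pi 0%N) rho w _ mw wpos wM wint.
have iS : rho.-integrable setT (EFin \o Sk T).
  apply: (@bnd_int _ _ _ rho _ (T%:R * C)); first exact: mSk.
  by move=> g; case/andP: (ST g) => s0 s1; rewrite ger0_norm.
pose sR := fine (\int[rho]_g (Sk T g)%:E).
have EsR : (\int[rho]_g (Sk T g)%:E = sR%:E)%E.
  by rewrite fineK // (integrable_fin_num measurableT iS).
have Elnw : (\int[rho]_g (ln (w g))%:E = (- eta * sR - ln (Vt T))%:E)%E.
  under eq_integral do rewrite lnw EFinB.
  rewrite integralB_EFin //; first last.
  - exact: finite_measure_integrable_cst.
  - have -> : (EFin \o (fun g => - eta * Sk T g)) = (fun g => (- eta)%:E * (Sk T g)%:E)%E.
      by apply/funext => g /=; rewrite EFinM.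
    exact: integrableZl.
  under eq_integral do rewrite EFinM.
  by rewrite integralZl // EsR integral_cst // probT mule1 -EFinM -EFinB.
have bl t g : (t < T)%N ->
    ((L t g - beta g (m t))%:E <= best_loss rep H ell m x y t g)%E.
  move=> tT; move: (reg t g tT); rewrite /regret -/L.
  case: (best_loss rep H ell m x y t g) => [b| |] //=.
  - by rewrite -EFinB !lee_fin => h; lra.
  - by move=> _; exact: leey.
have Tinv0 : 0 <= T%:R^-1 :> R by rewrite invr_ge0.
have Fpt g : ((T%:R^-1 * Sk T g)%:E <=
    (T%:R^-1)%:E * (\sum_(t < T) best_loss rep H ell m x y t g)
     + (T%:R^-1 * \sum_(t < T) beta g (m t))%:E)%E.
  have h1 : ((\sum_(t < T) (L t g - beta g (m t)))%:E <=
      \sum_(t < T) best_loss rep H ell m x y t g)%E.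
    rewrite -sumEFin; apply: lee_sum => t _; exact: bl.
  have T0e : (0 <= (T%:R^-1)%:E :> \bar R)%E by rewrite lee_fin.
  have h2 := lee_wpmul2l T0e h1.
  apply: le_trans (leeD h2 (le_refl _)).
  by rewrite -EFinM -EFinD lee_fin sumrB /Sk; lra.
have IF : ((T%:R^-1 * sR)%:E <= \int[rho]_g
     ((T%:R^-1)%:E * (\sum_(t < T) best_loss rep H ell m x y t g)
      + (T%:R^-1 * \sum_(t < T) beta g (m t))%:E))%E.
  have f0 g : (0 <= (T%:R^-1 * Sk T g)%:E)%E.
    by rewrite lee_fin mulr_ge0 //; case/andP: (ST g).
  apply: le_trans (@le_integral_nm _ _ _ rho _ _ f0 Fpt).
  under eq_integral do rewrite EFinM.
  by rewrite integralZl // EsR -EFinM.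
have iL t : (t < T)%N -> (pi t).-integrable setT (EFin \o L t).
  move=> tT; apply: (@bnd_int _ _ _ (pi t) _ C); first exact: mL.
  by move=> g; case/andP: (LC' t g tT) => a b; rewrite ger0_norm.
have LHS : ((T%:R^-1)%:E * (\sum_(t < T) \int[pi t]_g (L t g)%:E)
    = (T%:R^-1 * \sum_(t < T) Et t)%:E)%E.
  rewrite EFinM -sumEFin; congr (_ * _)%E; apply: eq_bigr => t _.
  by rewrite /Et fineK // (integrable_fin_num measurableT (iL t (ltn_ord t))).
rewrite LHS.
pose K := (eta * T%:R)^-1.
have K0 : 0 <= K by rewrite invr_ge0 mulr_ge0 // ltW.
have KL1 : (((- eta * sR - ln (Vt T)) * K)%:E <= KL rho (pi 0%N) * K%:E)%E.
  by rewrite EFinM; apply: lee_wpmul2r; rewrite ?lee_fin // -Elnw.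
apply: le_trans (leeD (leeD IF (le_refl _)) KL1).
rewrite -!EFinD lee_fin.
have Tn0 : T%:R != 0 :> R by rewrite pnatr_eq0 -lt0n.
have e1 : eta * (\sum_(t < T) Et t) * K = T%:R^-1 * \sum_(t < T) Et t.
  by rewrite /K; field; rewrite Tn0 gt_eqF.
have e2 : T%:R * (eta ^+ 2 * C ^+ 2 / 8) * K = eta * C ^+ 2 / 8.
  by rewrite /K; field; rewrite Tn0 gt_eqF.
have e3 : eta * sR * K = T%:R^-1 * sR.
  by rewrite /K; field; rewrite Tn0 gt_eqF.
have h := ler_wpM2r K0 sumH.
nra.
Qed.
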